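(* Let $\Phi_o$ be a $\mathrm{Spin}(7)$-structure on an oriented $8$-manifold with metric $g_o$, let $v,w$ be vector fields, and let $\sigma_7 = v^\flat\wedge(w\lrcorner\Phi_o) - w^\flat\wedge(v\lrcorner\Phi_o)$, $\tilde\Phi = \Phi_o + \sigma_7$. Then \[ \tilde\Phi\wedge\tilde\Phi = \left(1+\tfrac47|v\wedge w|_o^2\right)\Phi_o\wedge\Phi_o . \]
   Context: A $\mathrm{Spin}(7)$-structure on an oriented $8$-manifold $M$ is a $4$-form $\Phi$ such that at each point $p$ there are local coordinates $x^0,\dots,x^7$ with $\Phi_p = dx^{0123} - dx^{0167} - dx^{0527} - dx^{0563} + dx^{0415} + dx^{0426} + dx^{0437} + dx^{4567} - dx^{4523} - dx^{4163} - dx^{4127} + dx^{2637} + dx^{1537} + dx^{1526}$. It determines a Riemannian metric (equal to $\sum_k dx^k\otimes dx^k$ at $p$), orientation, volume form and Hodge star; $\Phi\wedge\Phi=14\,\mathrm{vol}$. $v^\flat=g_o(v,\cdot)$, and $|v\wedge w|_o^2 = |v|_o^2|w|_o^2 - g_o(v,w)^2$. *)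

(* Defs.v *)
(* Pointwise linear algebra of the exterior algebra of R^8,
   written in a Spin(7)-adapted coframe dx^0..dx^7 at a point. *)
From HB Require Import structures.
From mathcomp Require Import all_boot all_order all_algebra.
Set Implicit Arguments. Unset Strict Implicit. Unset Printing Implicit Defensive.
Import Order.TTheory GRing.Theory Num.Theory.
Local Open Scope ring_scope.

(* An element of the exterior algebra Λ(R^8)^*: the coefficient of
   dx^I = dx^{i1} ∧ ... ∧ dx^{ik} (i1 < ... < ik) for every subset I. *)
Notation form R := {ffun {set 'I_8} -> R^o}.

Section Ext.
Variable R : realFieldType.

Definition inv_count (I J : {set 'I_8}) : nat :=
  #|[set p : 'I_8 * 'I_8 | [&& p.1 \in I, p.2 \in J & (p.2 < p.1)%N]]|.

(* dx^I ∧ dx^J = (-1)^{inv_count I J} dx^{I ∪ J} for disjoint I, J *)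
Definition wedge (a b : form R) : form R :=
  [ffun K : {set 'I_8} => \sum_(I : {set 'I_8} | I \subset K)
               (-1) ^+ inv_count I (K :\: I) * a I * b (K :\: I)].

Definition dx (i : 'I_8) : form R := [ffun K : {set 'I_8} => if K == [set i] then 1 else 0].

Definition contr (v : 'rV[R]_8) (a : form R) : form R :=
  [ffun I : {set 'I_8} => \sum_(j : 'I_8 | j \notin I)
               (-1) ^+ #|[set i in I | (i < j)%N]| * v 0 j * a (j |: I)].

(* Euclidean metric g_o in the adapted coframe *)
Definition dot (u v : 'rV[R]_8) : R := \sum_i u 0 i * v 0 i.

Definition flat (v : 'rV[R]_8) : form R := \sum_j v 0 j *: dx j.

Definition wedge_norm2 (v w : 'rV[R]_8) : R :=
  dot v v * dot w w - (dot v w) ^+ 2.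

Definition dx4 (a b c d : nat) : form R :=
  wedge (dx (inord a)) (wedge (dx (inord b)) (wedge (dx (inord c)) (dx (inord d)))).

Definition Phi0 : form R :=
  dx4 0 1 2 3 - dx4 0 1 6 7 - dx4 0 5 2 7 - dx4 0 5 6 3
  + dx4 0 4 1 5 + dx4 0 4 2 6 + dx4 0 4 3 7 + dx4 4 5 6 7
  - dx4 4 5 2 3 - dx4 4 1 6 3 - dx4 4 1 2 7
  + dx4 2 6 3 7 + dx4 1 5 3 7 + dx4 1 5 2 6.

End Ext.

(* Main.v *)
From Stdlib Require Import Ring_polynom Ring_theory InitialRing ZArith.
From HB Require Import structures.
From mathcomp Require Import all_boot all_order all_algebra.
Set Implicit Arguments. Unset Strict Implicit. Unset Printing Implicit Defensive.
Require Import Defs.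
Import Order.TTheory GRing.Theory Num.Theory.

Notation Pz := (Pol Z).
Definition PZ0 : Pz := P0 Z0.
Definition PZ1 : Pz := P1 (Zpos 1).
Definition padd (p q : Pz) : Pz := Padd Z0 Z.add Zeq_bool p q.
Definition pmul (p q : Pz) : Pz := Pmul Z0 (Zpos 1) Z.add Z.mul Zeq_bool p q.
Definition popp (p : Pz) : Pz := Popp Z.opp p.
Definition peq (p q : Pz) : bool := Peq Zeq_bool p q.
Arguments peq : simpl never.
Definition pX (k : nat) : Pz := mk_X Z0 (Zpos 1) (Pos.of_succ_nat k).

Definition sform := seq (seq bool * Pz).
Definition bor (b1 b2 : seq bool) := [seq nth false b1 i || nth false b2 i | i <- iota 0 8].
Definition disjb (b1 b2 : seq bool) := all (fun i => ~~ (nth false b1 i && nth false b2 i)) (iota 0 8).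
Definition cinv (b1 b2 : seq bool) : nat :=
  sumn [seq sumn [seq ((j < i) && nth false b1 i && nth false b2 j : nat) | j <- iota 0 8] | i <- iota 0 8].
Definition cntbelow (b : seq bool) (k : nat) : nat := sumn [seq ((i < k) && nth false b i : nat) | i <- iota 0 8].
Definition sgnP (n : nat) (p : Pz) := if odd n then popp p else p.
Definition canon (b : seq bool) := [seq nth false b i | i <- iota 0 8].
Fixpoint allbits n : seq (seq bool) :=
  if n is n'.+1 then [seq x :: r | x <- [:: false; true], r <- allbits n'] else [:: [::]].
Definition coefP (l : sform) (c : seq bool) : Pz :=
  foldr (fun x acc => if canon x.1 == c then padd x.2 acc else acc) PZ0 l.
Definition nz (l : sform) : sform := filter (fun x => ~~ peq x.2 PZ0) l.
Definition compress (l : sform) : sform := nz [seq (c, coefP l c) | c <- allbits 8].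
Definition rawwedge (l1 l2 : sform) : sform :=
  flatten [seq [seq (bor x.1 y.1, sgnP (cinv x.1 y.1) (pmul x.2 y.2)) | y <- l2 & disjb x.1 y.1] | x <- l1].
Definition swedge l1 l2 := compress (rawwedge l1 l2).
Definition sccontr (X : nat -> Pz) (l : sform) : sform :=
  flatten [seq [seq (set_nth false x.1 k false, sgnP (cntbelow x.1 k) (pmul (X k) x.2)) | k <- iota 0 8 & nth false x.1 k] | x <- l].
Definition mkbits (a : nat) := [seq i == a | i <- iota 0 8].
Definition sdx (a : nat) : sform := [:: (mkbits a, PZ1)].
Definition sdx4 a b c d := swedge (sdx a) (swedge (sdx b) (swedge (sdx c) (sdx d))).
Definition sopp (l : sform) : sform := [seq (x.1, popp x.2) | x <- l].
Definition sscale p (l : sform) : sform := [seq (x.1, pmul p x.2) | x <- l].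
Definition sflat (X : nat -> Pz) : sform := [seq (mkbits k, X k) | k <- iota 0 8].
Definition sPhi : sform :=
  sdx4 0 1 2 3 ++ sopp (sdx4 0 1 6 7) ++ sopp (sdx4 0 5 2 7) ++ sopp (sdx4 0 5 6 3)
  ++ sdx4 0 4 1 5 ++ sdx4 0 4 2 6 ++ sdx4 0 4 3 7 ++ sdx4 4 5 6 7
  ++ sopp (sdx4 4 5 2 3) ++ sopp (sdx4 4 1 6 3) ++ sopp (sdx4 4 1 2 7)
  ++ sdx4 2 6 3 7 ++ sdx4 1 5 3 7 ++ sdx4 1 5 2 6.
Definition Xv k := pX k.
Definition Xw k := pX (8 + k).
Definition sdot a b := foldr padd PZ0 [seq pmul (pX (a + k)) (pX (b + k)) | k <- iota 0 8].
Definition n2poly := padd (pmul (sdot 0 0) (sdot 8 8)) (popp (pmul (sdot 0 8) (sdot 0 8))).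
Definition Qpoly := padd (Pc (Zpos 7)) (pmul (Pc (Zpos 4)) n2poly).
Definition sPhit := sPhi ++ (swedge (sflat Xv) (sccontr Xw sPhi) ++ sopp (swedge (sflat Xw) (sccontr Xv sPhi))).
Definition checkeq (l1 l2 : sform) : bool :=
  all (fun c => peq (coefP l1 c) (coefP l2 c)) (allbits 8).
Local Open Scope ring_scope.
Section RingSetup.
Variable R : realFieldType.

Lemma Rth : ring_theory (0 : R) 1 +%R *%R (fun x y => x - y) -%R eq.
Proof.
constructor => //.
- exact: add0r. - exact: addrC. - exact: addrA. - exact: mul1r. - exact: mulrC.
- exact: mulrA. - exact: mulrDl. - move=> x; exact: subrr.
Qed.

Lemma Rsth : Setoid.Setoid_Theory R (@eq R).
Proof. by split; [move=> x|move=> x y ->|move=> x y z -> ->]. Qed.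

Lemma Reqe : ring_eq_ext (@GRing.add R) (@GRing.mul R) (@GRing.opp R) eq.
Proof. by constructor; move=> x y -> // ? ? ->. Qed.

Definition ARth := Rth_ARth Rsth Reqe Rth.
Definition Rmorph := gen_phiZ_morph Rsth Reqe Rth.

Definition peval (env : list R) (p : Pz) : R :=
  Pphi 0 +%R *%R (gen_phiZ 0 1 +%R *%R -%R) env p.

Lemma peval_add env p q : peval env (padd p q) = peval env p + peval env q.
Proof. exact: (Padd_ok Rsth Reqe ARth Rmorph). Qed.
Lemma peval_mul env p q : peval env (pmul p q) = peval env p * peval env q.
Proof. exact: (Pmul_ok Rsth Reqe ARth Rmorph). Qed.
Lemma peval_opp env p : peval env (popp p) = - peval env p.
Proof. exact: (Popp_ok Rsth Reqe ARth Rmorph). Qed.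
Lemma peval_peq env p q : peq p q -> peval env p = peval env q.
Proof. move=> h; exact: (Peq_ok Rsth Reqe Rmorph _ _ h env). Qed.
Lemma peval0 env : peval env PZ0 = 0.
Proof. by []. Qed.
Lemma peval1 env : peval env PZ1 = 1.
Proof. by []. Qed.
Lemma peval_X env k : peval env (pX k) = BinList.nth 0 (Pos.of_succ_nat k) env.
Proof. symmetry; exact: (mkX_ok Rsth Reqe ARth Rmorph). Qed.

Implicit Types (a b : form R) (A B K I S : {set 'I_8}).

Lemma wedge0l b : wedge 0 b = 0.
Proof. apply/ffunP => K; rewrite !ffunE big1 // => I _; by rewrite ffunE mulr0 mul0r. Qed.
Lemma wedge0r a : wedge a 0 = 0.
Proof. apply/ffunP => K; rewrite !ffunE big1 // => I _; by rewrite ffunE mulr0. Qed.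
Lemma wedgeDl a1 a2 b : wedge (a1 + a2) b = wedge a1 b + wedge a2 b.
Proof.
apply/ffunP => K; rewrite !ffunE -big_split; apply: eq_bigr => I _.
by rewrite ffunE mulrDr mulrDl.
Qed.
Lemma wedgeDr a b1 b2 : wedge a (b1 + b2) = wedge a b1 + wedge a b2.
Proof.
apply/ffunP => K; rewrite !ffunE -big_split; apply: eq_bigr => I _.
by rewrite ffunE mulrDr.
Qed.
Lemma scaleRo (c x : R) : c *: (x : R^o) = c * x. Proof. by []. Qed.
Lemma wedgeZl c a b : wedge (c *: a) b = c *: wedge a b.
Proof.
apply/ffunP => K; rewrite !ffunE scaler_sumr; apply: eq_bigr => I _; rewrite ffunE !scaleRo.
by rewrite mulrCA !mulrA.
Qed.
Lemma wedgeZr c a b : wedge a (c *: b) = c *: wedge a b.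
Proof.
apply/ffunP => K; rewrite !ffunE scaler_sumr; apply: eq_bigr => I _; rewrite ffunE !scaleRo.
by rewrite mulrCA.
Qed.

Definition e S : form R := [ffun K => if K == S then 1 else 0].

Lemma disjP A B : reflect (forall i, i \in A -> i \in B -> False) [disjoint A & B].
Proof.
rewrite -setI_eq0; apply: (iffP eqP) => [h i iA iB | h].
  by have := in_set0 i; rewrite -h inE iA iB.
apply/setP => i; rewrite !inE; apply/negP => /andP[]; exact: h.
Qed.

Lemma wedge_key A B K :
  (A \subset K) && (K :\: A == B) = [disjoint A & B] && (K == A :|: B).
Proof.
apply/idP/idP.
- case/andP => AK /eqP <-; apply/andP; split.
    rewrite -setI_eq0; apply/eqP/setP => i; rewrite !inE.
    by case: (i \in A); rewrite ?andbF.
  apply/eqP/setP => i; rewrite !inE.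
  by case hA: (i \in A) => //=; rewrite (subsetP AK).
- case/andP => dAB /eqP ->; rewrite subsetUl /=.
  apply/eqP/setP => i; rewrite !inE.
  case hA: (i \in A) => //=.
  move/disjP: dAB => d.
  by apply/esym/negbTE/negP => hB; exact: d i hA hB.
Qed.

Lemma wedge_e A B :
  wedge (e A) (e B) = if [disjoint A & B] then (-1) ^+ inv_count A B *: e (A :|: B) else 0.
Proof.
apply/ffunP => K; rewrite !ffunE.
rewrite big_mkcond (bigD1 A) //= big1 => [|I nIA]; last first.
  by case: ifP => // _; rewrite !ffunE (negbTE nIA) mulr0 mul0r.
rewrite addr0 !ffunE eqxx mulr1.
have := wedge_key A B K.
case: (boolP (A \subset K)) => AK /= h.
- case: (boolP [disjoint A & B]) h => dAB /= h; rewrite !ffunE.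
    rewrite ?scaleRo ?ffunE -h; case: eqP => [->|_]; by rewrite ?mulr1 ?mulr0.
  by rewrite h mulr0.
- case: (boolP [disjoint A & B]) h => dAB /= h; rewrite !ffunE //.
  by rewrite ?scaleRo ?ffunE -h mulr0.
Qed.

Lemma contr0 (v : 'rV[R]_8) : contr v 0 = 0.
Proof. apply/ffunP => I; rewrite !ffunE big1 // => j _; by rewrite ffunE mulr0. Qed.
Lemma contrD (v : 'rV[R]_8) a1 a2 : contr v (a1 + a2) = contr v a1 + contr v a2.
Proof.
apply/ffunP => I; rewrite !ffunE -big_split; apply: eq_bigr => j _.
by rewrite ffunE mulrDr.
Qed.
Lemma contrZ (v : 'rV[R]_8) c a : contr v (c *: a) = c *: contr v a.
Proof.
apply/ffunP => I; rewrite !ffunE scaler_sumr; apply: eq_bigr => j _; rewrite ffunE !scaleRo.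
by rewrite mulrCA.
Qed.

Lemma contr_e (v : 'rV[R]_8) S :
  contr v (e S) = \sum_(j in S) ((-1) ^+ #|[set i in S :\ j | (i < j)%N]| * v 0 j) *: e (S :\ j).
Proof.
apply/ffunP => I; rewrite !ffunE sum_ffunE big_mkcond [RHS]big_mkcond.
apply: eq_bigr => j _; rewrite !ffunE.
have [->|nI] := eqVneq I (S :\ j).
  rewrite setD11 /= ?scaleRo ?mulr1.
  case: (boolP (j \in S)) => jS.
    by rewrite setD1K // eqxx mulr1.
  have -> : (j |: S :\ j == S) = false.
    by apply/negbTE; apply: contra jS => /eqP <-; rewrite setU11.
  by rewrite mulr0.
rewrite ?scaleRo mulr0 if_same.
case: (boolP (j \in I)) => jI //=.
have -> : (j |: I == S) = false.
  apply/negbTE; apply: contra nI => /eqP <-.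
  by rewrite setU1K.
by rewrite mulr0.
Qed.

Definition setof (b : seq bool) : {set 'I_8} := [set i : 'I_8 | nth false b i].

Lemma nth_iota8 (f : nat -> bool) (i : 'I_8) : nth false [seq f k | k <- iota 0 8] i = f i.
Proof. by rewrite (nth_map 0%N) ?size_iota ?nth_iota. Qed.

Lemma setof_bor (b1 b2 : seq bool) : setof (bor b1 b2) = setof b1 :|: setof b2.
Proof. by apply/setP => i; rewrite !inE nth_iota8. Qed.

Lemma disjb_ok (b1 b2 : seq bool) : [disjoint setof b1 & setof b2] = disjb b1 b2.
Proof.
apply/disjP/allP => [H k | H i].
  rewrite mem_iota => /andP[_ k8]; apply/negP => /andP[h1 h2].
  by apply: (H (Ordinal k8)); rewrite inE.
rewrite !inE => h1 h2; have := H i; rewrite mem_iota ltn_ord h1 h2.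
by move/(_ isT).
Qed.

Lemma sum_iota8 (f : nat -> nat) : sumn [seq f k | k <- iota 0 8] = \sum_(i < 8) f i.
Proof. by rewrite -(big_mkord xpredT) sumnE big_map. Qed.

Lemma card_setsum (T : finType) (P : pred T) : #|[set x | P x]| = (\sum_x (P x : nat))%N.
Proof. rewrite cardsE -sum1_card big_mkcond; apply: eq_bigr => x _; rewrite unfold_in; by case: (P x). Qed.

Lemma cinv_ok (b1 b2 : seq bool) : inv_count (setof b1) (setof b2) = cinv b1 b2.
Proof.
rewrite /inv_count card_setsum /cinv sum_iota8.
have -> : (\sum_x [&& x.1 \in setof b1, x.2 \in setof b2 & (x.2 < x.1)%N])%N =
   (\sum_(i < 8) \sum_(j < 8) ((j < i)%N && nth false b1 i && nth false b2 j : nat))%N.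
  rewrite pair_bigA; apply: eq_bigr => -[i j] _ /=.
  rewrite !inE. by case: (nth false b1 i); case: (nth false b2 j); case: (j < i)%N.
by apply: eq_bigr => i _; rewrite sum_iota8.
Qed.

Lemma setof_set_nth (b : seq bool) k : (k < 8)%N ->
  setof b :\ @inord 7 k = setof (set_nth false b k false).
Proof.
move=> k8; apply/setP => i; rewrite !inE nth_set_nth /=.
by rewrite -val_eqE /= inordK //; case: eqP.
Qed.

Lemma cntbelow_ok (b : seq bool) k : (k < 8)%N ->
  #|[set i in setof b :\ @inord 7 k | (i < @inord 7 k)%N]| = cntbelow b k.
Proof.
move=> k8; rewrite card_setsum /cntbelow sum_iota8; apply: eq_bigr => i _.
rewrite !inE -val_eqE /= inordK //.
by case: (ltngtP i k); rewrite ?andbF ?andbT //= => ->.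
Qed.

Lemma setof_mkbits (j : 'I_8) : setof (mkbits j) = [set j].
Proof. by apply/setP => i; rewrite !inE nth_iota8. Qed.

Lemma sum_ord_iota (V : zmodType) (P : pred 'I_8) (F : 'I_8 -> V) :
  \sum_(j | P j) F j = \sum_(k <- iota 0 8 | P (inord k)) F (inord k).
Proof.
rewrite -[iota 0 8]/(index_iota 0 8) big_mkord.
by apply: eq_big => [i|i _]; rewrite inord_val.
Qed.

Variable env : list R.
Notation pev := (peval env).

Definition den (l : sform) : form R := \sum_(x <- l) pev x.2 *: e (setof x.1).

Lemma den_nil : den [::] = 0. Proof. by rewrite /den big_nil. Qed.
Lemma den_cons x l : den (x :: l) = pev x.2 *: e (setof x.1) + den l.
Proof. by rewrite /den big_cons. Qed.
Lemma den_cat l1 l2 : den (l1 ++ l2) = den l1 + den l2.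
Proof. by rewrite /den big_cat. Qed.
Lemma den_opp l : den (sopp l) = - den l.
Proof. rewrite /den big_map -sumrN; apply: eq_bigr => x _; by rewrite peval_opp scaleNr. Qed.
Lemma den_scale p l : den (sscale p l) = pev p *: den l.
Proof. rewrite /den big_map scaler_sumr; apply: eq_bigr => x _; by rewrite peval_mul scalerA. Qed.

Lemma peval_sgn n p : pev (sgnP n p) = (-1) ^+ n * pev p.
Proof.
rewrite -signr_odd /sgnP; case: (odd n); by rewrite ?expr1 ?expr0 ?mulN1r ?mul1r ?peval_opp.
Qed.

Lemma canonK (b : seq bool) : setof (canon b) = setof b.
Proof. by apply/setP => i; rewrite !inE nth_iota8. Qed.

Lemma allbits_mem n (b : seq bool) : size b = n -> b \in allbits n.
Proof.
elim: n b => [|n IH] [|x b] //= [sb].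
rewrite /= cats0 mem_cat; case: x; apply/orP; [right|left]; rewrite mem_map ?IH //; by move=> ? ? [->].
Qed.

Lemma allbits_uniq : uniq (allbits 8).
Proof. by vm_compute. Qed.

Lemma canon_mem (b : seq bool) : canon b \in allbits 8.
Proof. by apply: allbits_mem; rewrite size_map size_iota. Qed.

Lemma den_coef l : den l = \sum_(c <- allbits 8) pev (coefP l c) *: e (setof c).
Proof.
elim: l => [|x l IH].
  rewrite den_nil big1_seq // => c _; by rewrite peval0 scale0r.
rewrite den_cons IH /=.
have -> : \sum_(c <- allbits 8) pev (if canon x.1 == c then padd x.2 (coefP l c) else coefP l c) *: e (setof c)
   = \sum_(c <- allbits 8) ((if canon x.1 == c then pev x.2 else 0) *: e (setof c) + pev (coefP l c) *: e (setof c)).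
  apply: eq_bigr => c _; case: ifP => _; by rewrite ?peval_add ?scalerDl ?scale0r ?add0r.
rewrite big_split /=; congr (_ + _).
rewrite (big_rem (canon x.1)) ?canon_mem //= eqxx canonK big1_seq ?addr0 // => c /andP[_ cin].
have : c \in [predD1 allbits 8 & canon x.1] by rewrite -mem_rem_uniq // allbits_uniq.
by rewrite inE eq_sym => /andP[/negbTE -> _]; rewrite scale0r.
Qed.

Lemma den_nz l : den (nz l) = den l.
Proof.
elim: l => [|x l IH] //=; case: ifP => h; rewrite !den_cons IH //.
by move/negbFE: h => h; rewrite (peval_peq env h) peval0 scale0r add0r.
Qed.

Lemma den_compress l : den (compress l) = den l.
Proof. by rewrite den_nz /den big_map -den_coef. Qed.

Lemma den_eq l1 l2 : checkeq l1 l2 -> den l1 = den l2.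
Proof.
move/allP => H; rewrite !den_coef; apply: eq_big_seq => c cin.
by rewrite (peval_peq env (H c cin)).
Qed.

Lemma wedge_den_l b l : wedge (den l) b = \sum_(x <- l) pev x.2 *: wedge (e (setof x.1)) b.
Proof.
elim: l => [|x l IH]; first by rewrite den_nil wedge0l big_nil.
by rewrite den_cons wedgeDl wedgeZl IH big_cons.
Qed.

Lemma den_rawwedge l1 l2 : wedge (den l1) (den l2) = den (rawwedge l1 l2).
Proof.
rewrite wedge_den_l; elim: l1 => [|x l1 IH]; first by rewrite big_nil den_nil.
rewrite big_cons IH /rawwedge /= den_cat -/(rawwedge l1 l2); congr (_ + _).
clear IH; elim: l2 => [|y l2 IH2]; first by rewrite den_nil wedge0r scaler0.
rewrite den_cons wedgeDr wedgeZr wedge_e scalerDr IH2 /=.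
rewrite disjb_ok; case: ifP => dj; last by rewrite scaler0 scaler0 add0r.
rewrite den_cons; congr (_ + _).
rewrite /= !scalerA peval_sgn peval_mul setof_bor cinv_ok; congr (_ *: _); exact: mulrC.
Qed.

Lemma den_swedge l1 l2 : wedge (den l1) (den l2) = den (swedge l1 l2).
Proof. by rewrite den_rawwedge /swedge den_compress. Qed.

Lemma contr_den_l (v : 'rV[R]_8) l : contr v (den l) = \sum_(x <- l) pev x.2 *: contr v (e (setof x.1)).
Proof.
elim: l => [|x l IH]; first by rewrite den_nil contr0 big_nil.
by rewrite den_cons contrD contrZ IH big_cons.
Qed.

Lemma sccontr_cons X x l : sccontr X (x :: l) =
  [seq (set_nth false x.1 k false, sgnP (cntbelow x.1 k) (pmul (X k) x.2)) | k <- iota 0 8 & nth false x.1 k]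
  ++ sccontr X l.
Proof. by []. Qed.

Lemma den_contr (v : 'rV[R]_8) (X : nat -> Pz) :
  (forall k, (k < 8)%N -> pev (X k) = v 0 (inord k)) ->
  forall l, contr v (den l) = den (sccontr X l).
Proof.
move=> hX l; rewrite contr_den_l; elim: l => [|x l IH]; first by rewrite big_nil den_nil.
rewrite big_cons IH sccontr_cons den_cat; congr (_ + _).
rewrite contr_e sum_ord_iota scaler_sumr /den big_map big_filter.
rewrite [LHS]big_seq_cond [RHS]big_seq_cond; apply: eq_big => [k|k /andP[]]; rewrite mem_iota /=.
  by case k8: (k < 8)%N; rewrite ?andbF //= inE inordK.
move=> k8 _.
rewrite scalerA peval_sgn peval_mul hX // cntbelow_ok // setof_set_nth //.
congr (_ *: _); rewrite mulrCA; congr (_ * _); exact: mulrC.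
Qed.

End RingSetup.

From mathcomp Require Import ring.
Local Open Scope ring_scope.

Section S.
Variable R : realFieldType.
Variable env : list R.
Notation pev := (peval env).
Notation den := (den env).
Lemma dx_den (a : nat) : (a < 8)%N -> dx R (@inord 7 a) = den (sdx a).
Proof.
move=> a8; rewrite den_cons den_nil addr0 peval1 scale1r /=.
have := setof_mkbits (inord a); rewrite inordK // => ->.
(rewrite /dx /e; reflexivity).
Qed.

Lemma flat_den (v : 'rV[R]_8) (X : nat -> Pz) :
  (forall k, (k < 8)%N -> pev (X k) = v 0 (inord k)) -> flat v = den (sflat X).
Proof.
move=> hX; rewrite /flat sum_ord_iota /den big_map.
apply: eq_big_seq => k; rewrite mem_iota => /andP[_ k8] /=.
rewrite hX //; congr (_ *: _).
have := setof_mkbits (inord k); rewrite inordK // => ->.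
rewrite /dx /e; reflexivity.
Qed.

Lemma dx4_den (a b c d : nat) : (a < 8)%N -> (b < 8)%N -> (c < 8)%N -> (d < 8)%N ->
  dx4 R a b c d = den (sdx4 a b c d).
Proof.
move=> ha hb hc hd; rewrite /dx4 (dx_den ha) (dx_den hb) (dx_den hc) (dx_den hd).
by rewrite (den_swedge env (sdx c) (sdx d)) (den_swedge env (sdx b)) (den_swedge env (sdx a)).
Qed.

Lemma Phi_den : Phi0 R = den sPhi.
Proof.
rewrite /Phi0 !dx4_den // /sPhi.
move: (sdx4 0 1 2 3) (sdx4 0 1 6 7) (sdx4 0 5 2 7) (sdx4 0 5 6 3) (sdx4 0 4 1 5)
  (sdx4 0 4 2 6) (sdx4 0 4 3 7) (sdx4 4 5 6 7) (sdx4 4 5 2 3) (sdx4 4 1 6 3)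
  (sdx4 4 1 2 7) (sdx4 2 6 3 7) (sdx4 1 5 3 7) (sdx4 1 5 2 6).
move=> s1 s2 s3 s4 s5 s6 s7 s8 s9 s10 s11 s12 s13 s14.
rewrite !den_cat !den_opp.
by rewrite !addrA.
Qed.

Lemma peval_c7 : pev (Pc (Zpos 7)) = 7%:R.
Proof. rewrite /peval /=. ring. Qed.
Lemma peval_c4 : pev (Pc (Zpos 4)) = 4%:R.
Proof. rewrite /peval /=. ring. Qed.

Lemma peval_foldr (s : seq Pz) : pev (foldr padd PZ0 s) = \sum_(p <- s) pev p.
Proof.
elim: s => [|p s IH]; first by rewrite big_nil peval0.
by rewrite big_cons /= peval_add IH.
Qed.

Lemma sdot_ok (v w : 'rV[R]_8) (a b : nat) :
  (forall k, (k < 8)%N -> pev (pX (a + k)) = v 0 (inord k)) ->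
  (forall k, (k < 8)%N -> pev (pX (b + k)) = w 0 (inord k)) ->
  pev (sdot a b) = dot v w.
Proof.
move=> ha hb; rewrite /sdot peval_foldr big_map /dot sum_ord_iota.
apply: eq_big_seq => k; rewrite mem_iota => /andP[_ k8] /=.
by rewrite peval_mul ha // hb.
Qed.

Lemma glue (v w : 'rV[R]_8) (sP sFv sFw : sform) (cw cv : sform -> sform) (Q : Pz) :
  Phi0 R = den sP -> flat v = den sFv -> flat w = den sFw ->
  (forall l, contr w (den l) = den (cw l)) -> (forall l, contr v (den l) = den (cv l)) ->
  pev Q = 7%:R * (1 + 4 / 7 * wedge_norm2 v w) ->
  (let T := sP ++ (swedge sFv (cw sP) ++ sopp (swedge sFw (cv sP))) in
   den (sscale (Pc (Zpos 7)) (swedge T T)) = den (sscale Q (swedge sP sP))) ->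
  let sigma7 :=
    wedge (flat v) (contr w (Phi0 R)) - wedge (flat w) (contr v (Phi0 R)) in
  let Phit := Phi0 R + sigma7 in
  wedge Phit Phit = (1 + 4 / 7 * wedge_norm2 v w) *: wedge (Phi0 R) (Phi0 R).
Proof.
move=> hP hFv hFw hcw hcv hQ key sigma7 Phit; rewrite /Phit /sigma7 /= in key *.
rewrite hP hFv hFw hcw hcv.
rewrite (den_swedge env sFv (cw sP)) (den_swedge env sFw (cv sP)) -(den_opp env).
rewrite -(den_cat env (swedge sFv (cw sP))) -(den_cat env sP).
set T := sP ++ _.
rewrite (den_swedge env T T) (den_swedge env sP sP).
apply: (@scalerI _ _ 7%:R); first by rewrite pnatr_eq0.
by rewrite scalerA -hQ -peval_c7 -!den_scale.
Qed.
End S.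

Theorem mainTheorem18 (R : realFieldType) (v w : 'rV[R]_8) :
  let sigma7 :=
    wedge (flat v) (contr w (Phi0 R)) - wedge (flat w) (contr v (Phi0 R)) in
  let Phit := Phi0 R + sigma7 in
  wedge Phit Phit = (1 + 4 / 7 * wedge_norm2 v w) *: wedge (Phi0 R) (Phi0 R).
Proof.
pose env := [seq v 0 (inord k) | k <- iota 0 8] ++ [seq w 0 (inord k) | k <- iota 0 8].
have hv : forall k, (k < 8)%N -> peval env (pX (0 + k)) = v 0 (inord k).
  move=> k k8; rewrite peval_X.
  by do 8 (case: k k8 => [|k] k8 //).
have hw : forall k, (k < 8)%N -> peval env (pX (8 + k)) = w 0 (inord k).
  move=> k k8; rewrite peval_X.
  by do 8 (case: k k8 => [|k] k8 //).
have hv' : forall k, (k < 8)%N -> peval env (Xv k) = v 0 (inord k) by exact: hv.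
have hw' : forall k, (k < 8)%N -> peval env (Xw k) = w 0 (inord k) by exact: hw.
apply: (@glue R env v w sPhi (sflat Xv) (sflat Xw) (sccontr Xw) (sccontr Xv) Qpoly).
- exact: Phi_den.
- exact: flat_den hv'.
- exact: flat_den hw'.
- exact: den_contr hw'.
- exact: den_contr hv'.
- rewrite /Qpoly peval_add peval_mul peval_c7 peval_c4 /n2poly peval_add peval_opp !peval_mul.
  rewrite (sdot_ok hv hv) (sdot_ok hw hw) (sdot_ok hv hw) /wedge_norm2.
  by field.
- move=> T; apply: den_eq.
  by vm_compute.
Qed.
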